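(* Let $(a_n)_{n\ge 0}$ be the Pisot sequence $E(4,7)$, i.e. $a_0=4$, $a_1=7$, and $a_n=\left\lfloor \frac{a_{n-1}^2}{a_{n-2}}+\frac12\right\rfloor$ for $n\ge 2$. Then $a_n = 2a_{n-1}-a_{n-2}+a_{n-3}$ for all $n\ge 3$.
   Context: $\lfloor x\rfloor$ denotes the largest integer $\le x$. The sequence begins $4, 7, 12, 21, 37, 65, 114, 200, \dots$. *)

(* Defs.v *)
From mathcomp Require Import all_boot all_order all_algebra.
Set Implicit Arguments. Unset Strict Implicit. Unset Printing Implicit Defensive.
Import Order.TTheory GRing.Theory Num.Theory.
Local Open Scope ring_scope.

Definition pisot_step (p : int * int) : int * int :=
  (p.2, Num.floor ((p.2%:~R ^+ 2 / p.1%:~R + 1 / 2 : rat))).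

Definition pisot_pair (n : nat) : int * int := iter n pisot_step (4, 7).

Definition a (n : nat) : int := (pisot_pair n).1.

Lemma a0 : a 0 = 4. Proof. by []. Qed.
Lemma a1 : a 1 = 7. Proof. by []. Qed.
Lemma a_rec (n : nat) : (2 <= n)%N ->
  a n = Num.floor ((a n.-1)%:~R ^+ 2 / (a n.-2)%:~R + 1 / 2 : rat).
Proof.
by case: n => [|[|n]].
Qed.

(* Main.v *)
Require Import Defs.
From mathcomp Require Import all_boot all_order all_algebra.
From mathcomp Require Import zify ring lra.
Import Order.TTheory GRing.Theory Num.Theory.
Local Open Scope ring_scope.

Definition step3 (t : int * int * int) : int * int * int :=
  let '(x, y, z) := t in (y, z, 2 * z - y + x).
Definition bt (n : nat) := iter n step3 (4, 7, 12).
Definition b (n : nat) : int := (bt n).1.1.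

Lemma btS n : bt n.+1 = step3 (bt n).
Proof. by rewrite /bt iterS. Qed.

Lemma bt_eq n : bt n = (b n, b n.+1, b n.+2).
Proof.
rewrite /b !btS; case: (bt n) => [[x y] z] //.
Qed.

Lemma b_rec n : b n.+3 = 2 * b n.+2 - b n.+1 + b n.
Proof. by rewrite {1}/b !btS bt_eq. Qed.

Lemma b_ratio n : 0 < b n /\ 5 * b n <= 3 * b n.+1 /\ 5 * b n.+1 <= 9 * b n.
Proof.
suff H : forall n, (0 < b n /\ 5 * b n <= 3 * b n.+1 /\ 5 * b n.+1 <= 9 * b n) /\
   (0 < b n.+1 /\ 5 * b n.+1 <= 3 * b n.+2 /\ 5 * b n.+2 <= 9 * b n.+1).
  by case: (H n).
elim=> [|m [[h1 [h2 h3]] [h4 [h5 h6]]]]; first by split; rewrite /b /=.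
split=> //; rewrite b_rec; lia.
Qed.

Definition E n : int := b n.+2 * b n - b n.+1 ^+ 2.

Lemma E_rec n : E n.+3 = E n.+2 - 2 * E n.+1 + E n.
Proof.
rewrite /E !b_rec.
move: (b n) (b n.+1) (b n.+2) => x y z; ring.
Qed.

Definition Q (e0 e1 e2 : int) : int :=
  5 * e0 ^+ 2 + 13 * e1 ^+ 2 + 7 * e2 ^+ 2 - 10 * e0 * e1 + 2 * e0 * e2 - 8 * e1 * e2.

Lemma Q_step e0 e1 e2 : 2 * Q e1 e2 (e2 - 2 * e1 + e0) <= 5 * Q e0 e1 e2.
Proof.
rewrite -subr_ge0.
have -> : 5 * Q e0 e1 e2 - 2 * Q e1 e2 (e2 - 2 * e1 + e0) =
  (e0 + e1) ^+ 2 + (e0 - e2) ^+ 2 + 9 * e0 ^+ 2 + 6 * e1 ^+ 2 + 10 * e2 ^+ 2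
  by rewrite /Q; ring.
have := sqr_ge0 (e0+e1). have := sqr_ge0 (e0-e2). have := sqr_ge0 e0. have := sqr_ge0 e1. have := sqr_ge0 e2. lia.
Qed.

Lemma Q_lb e0 e1 e2 : 1589 * e0 ^+ 2 <= 525 * Q e0 e1 e2.
Proof.
rewrite -subr_ge0.
have -> : 525 * Q e0 e1 e2 - 1589 * e0 ^+ 2 =
  75 * (7 * e2 - 4 * e1 + e0) ^+ 2 + (75 * e1 - 31 * e0) ^+ 2
  by rewrite /Q; ring.
have := sqr_ge0 (7 * e2 - 4 * e1 + e0). have := sqr_ge0 (75 * e1 - 31 * e0). lia.
Qed.

Lemma inv k : 4 * Q (E (k + 5)) (E (k + 6)) (E (k + 7)) <= 3 * b (k + 5) ^+ 2.
Proof.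
elim: k => [|k IH]; first by vm_compute.
have := Q_step (E (k + 5)) (E (k + 6)) (E (k + 7)).
have := E_rec (k + 5); rewrite -!addnS => <-.
have [h1 [h2 h3]] := b_ratio (k + 5).
rewrite -addnS in h2 h3.
rewrite !addSnnS.
move: IH h1 h2; move: (Q _ _ _) (Q _ _ _) (b (k + 5)) (b (k + 6)) => q1 q2 x y.
move=> H1 H2 H3 H4. nia. Qed.

Lemma E_small m : 4 * E m ^+ 2 < b m ^+ 2.
Proof.
case: m => [|[|[|[|[|m]]]]]; try by vm_compute.
have := inv m; have := Q_lb (E (m + 5)) (E (m + 6)) (E (m + 7)).
have [h1 _] := b_ratio (m + 5).
rewrite !addnS addn0 in h1 *.
move: h1. set q := Q _ _ _. set e := E _. set x := b _. move=> h1 h2 h3. clearbody q e x. have hx : 0 < x ^+ 2 by rewrite exprn_gt0. lia.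
Qed.

Lemma pp n : pisot_pair n = (b n, b n.+1).
Proof.
elim: n => [//|n IH].
rewrite /pisot_pair iterS -/(pisot_pair n) IH /pisot_step /=; congr pair.
apply/eqP; rewrite floor_eq.
have hE := E_small n.
have [h1 _] := b_ratio n.
have hA : 2 * E n < b n by nia.
have hB : - b n < 2 * E n by nia.
move: hA hB h1; rewrite /E.
move: (b n) (b n.+1) (b n.+2) => x y z hA hB hx.
have hA' : ((2 * (z * x - y ^+ 2))%:~R : rat) < x%:~R by rewrite ltr_int.
have hB' : ((- x)%:~R : rat) < (2 * (z * x - y ^+ 2))%:~R by rewrite ltr_int.
have hx' : (0 : rat) < x%:~R by rewrite ltr0z.
rewrite !(intrM, intrB, intrD, intrN, rmorphXn) /= in hA' hB' *.
move: hA' hB' hx' ; set X : rat := x%:~R; set Y : rat := y%:~R; set Z : rat := z%:~R.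
move=> hA' hB' hx'.
set w := Y ^+ 2 / X.
have hw : w * X = Y ^+ 2 by rewrite /w divfK // gt_eqF.
have e1 : (1%:~R : rat) = 1 by [].
rewrite e1 in hA' hB' *.
apply/andP; split; nra.
Qed.

Lemma a_b n : a n = b n.
Proof. by rewrite /a pp. Qed.


Theorem mainTheorem1 : forall n : nat, (3 <= n)%N ->
  a n = 2 * a (n - 1)%N - a (n - 2)%N + a (n - 3)%N.
Proof.
case=> [|[|[|n]]] // _.
rewrite !a_b /= !subSS !subn0 b_rec.
by [].
Qed.
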